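(* Assume the Lang–Waldschmidt conjecture: for every $\epsilon>0$ there is $C(\epsilon)>0$ such that for all positive integers $a_1,\dots,a_n$ and nonzero integers $b_1,\dots,b_n$ with $a_1^{b_1}\cdots a_n^{b_n}\neq1$, $$ \left|a_1^{b_1}\cdots a_n^{b_n}-1\right|\ge\frac{C(\epsilon)\max_j|b_j|}{|b_1\cdots b_na_1\cdots a_n|^{1+\epsilon}}. $$ Let $\epsilon>0$. Then there is a constant $C'_\epsilon$ such that for all $x\in\mathbb{P}^1(\mathbb{Q})\setminus\{0,1,\infty\}$, $$ \lambda_{\mathbb{P}^1,\infty}(1,x)<(1+\epsilon)N^{(1)}_{\mathbb{P}^1}([0]+[\infty],x)+\epsilon\, h(x)+C'_\epsilon. $$
   Context: For $x=b/c\in\mathbb{Q}$ with $b,c$ coprime integers, $h(x)=\log\max\{|b|,|c|\}$. $\lambda_{\mathbb{P}^1,\infty}(1,x)=\log^+(|1-x|^{-1})$ up to a bounded function, where $\log^+t=\log\max\{1,t\}$. Up to a bounded function, $N^{(1)}_{\mathbb{P}^1}([0]+[\infty],x)=\log\mathrm{rad}(bc)$, where $\mathrm{rad}(m)$ is the product of the distinct primes dividing $m$ (this is the truncated counting function $\sum_p\min\{\lambda_{\mathbb{P}^1,p}([0]+[\infty],x),\log p\}$). *)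

(* Defs.v *)
From Stdlib Require Import Reals ZArith.
From mathcomp Require Import ssreflect ssrbool ssrnat seq prime bigop.

Definition rad (m : nat) : nat := (\prod_(p <- primes m) p)%N.

Open Scope R_scope.

Fixpoint prodR (n : nat) (f : nat -> R) : R :=
  match n with O => 1 | S k => prodR k f * f k end.

Fixpoint maxR (n : nat) (f : nat -> R) : R :=
  match n with O => 0 | S k => Rmax (maxR k f) (f k) end.

Definition logplus (t : R) : R := ln (Rmax 1 t).

Definition LangWaldschmidt : Prop :=
  forall eps : R, 0 < eps -> exists C : R, 0 < C /\
    forall (n : nat) (a : nat -> nat) (b : nat -> Z),
      (forall j, (j < n)%coq_nat -> (0 < a j)%coq_nat) ->
      (forall j, (j < n)%coq_nat -> b j <> 0%Z) ->
      prodR n (fun j => powerRZ (INR (a j)) (b j)) <> 1 ->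
      Rabs (prodR n (fun j => powerRZ (INR (a j)) (b j)) - 1) >=
        C * maxR n (fun j => IZR (Z.abs (b j))) /
        Rpower (Rabs (prodR n (fun j => IZR (b j)) * prodR n (fun j => INR (a j))))
               (1 + eps).

(* h(b/c) = log max{|b|,|c|} *)
Definition height (b c : Z) : R := ln (IZR (Z.max (Z.abs b) (Z.abs c))).
(* lambda_{P^1,infty}(1, b/c) = log^+ (|1 - b/c|^{-1}) *)
Definition lambda1 (b c : Z) : R := logplus (/ Rabs (1 - IZR b / IZR c)).
(* N^{(1)}([0]+[infty], b/c) = log rad(bc) *)
Definition N1 (b c : Z) : R := ln (INR (rad (Z.abs_nat (b * c)))).

(* Main.v *)
Require Import Defs.
From Stdlib Require Import Reals ZArith Lia Lra.
From mathcomp Require Import all_boot zify.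
Open Scope nat_scope.


Lemma aux_pow e k : 0 < k -> e ^ k <= k ^ k * 2 ^ e.
Proof.
move=> k0.
set q := e %/ k.
have h1 : e < q.+1 * k by apply: ltn_ceil.
have h2 : q.+1 <= 2 ^ q by apply: ltn_expl.
have h3 : q * k <= e by apply: leq_divM.
have h4 : e <= k * 2 ^ q.
  apply: (leq_trans (ltnW h1)); rewrite mulnC; apply: leq_mul => //.
apply: (leq_trans (n := (k * 2 ^ q) ^ k)).
  by rewrite leq_exp2r.
rewrite expnMn -expnM; apply: leq_mul => //.
by apply: leq_pexp2l.
Qed.

Definition gk (k j : nat) := if j < 2 ^ k then k ^ k else 1.

Lemma gk_prod k N : (\prod_(0 <= j < N) gk k j) = (k ^ k) ^ (minn N (2 ^ k)).
Proof.
elim: N => [|N IH].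
  by rewrite big_mkord big_ord0 (_ : minn 0 (2 ^ k) = 0) //; lia.
rewrite big_nat_recr //= IH /gk.
case: ifP => h.
  have -> : minn N.+1 (2 ^ k) = (minn N (2 ^ k)).+1 by lia.
  by rewrite expnS mulnC.
have -> : minn N.+1 (2 ^ k) = minn N (2 ^ k) by lia.
by rewrite muln1.
Qed.

Lemma per_j k j e : 0 < k -> (0 < e -> prime j) -> (maxn 1 e) ^ k <= gk k j * j ^ e.
Proof.
move=> k0 pj.
have g1 : 0 < gk k j by rewrite /gk; case: ifP => _ //; rewrite expn_gt0; lia.
case: (posnP e) => [->|e0].
  by rewrite expn0 muln1 (_ : maxn 1 0 = 1) // exp1n.
have pr := pj e0.
have j2 := prime_gt1 pr.
rewrite (_ : maxn 1 e = e); last by lia.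
rewrite /gk; case: ifP => h.
  apply: (leq_trans (aux_pow e k k0)); apply: leq_mul => //.
  by rewrite leq_exp2r.
rewrite mul1n.
apply: (leq_trans (n := (2 ^ e) ^ k)).
  rewrite leq_exp2r //; apply: ltnW; exact: ltn_expl.
rewrite -expnM mulnC expnM leq_exp2r //; lia.
Qed.

Lemma core k m N : 0 < k -> 0 < m -> m < N ->
  (\prod_(0 <= j < N) maxn 1 (logn j m)) ^ k <= (k ^ k) ^ (2 ^ k) * m.
Proof.
move=> k0 m0 mN.
have -> : (\prod_(0 <= j < N) maxn 1 (logn j m)) ^ k =
   \prod_(0 <= j < N) (maxn 1 (logn j m)) ^ k.
  by rewrite (big_morph (fun x => x ^ k) (fun a b => expnMn a b k) (exp1n k)).
have hm : m = \prod_(0 <= j < N) j ^ logn j m.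
  have e1 := widen_partn predT (m := N.-1) (n := m) ltac:(lia).
  rewrite partnT // prednK in e1; last by apply: (leq_ltn_trans _ mN).
  by rewrite {1}e1.
apply: (leq_trans (n := \prod_(0 <= j < N) (gk k j * j ^ logn j m))).
  apply: leq_prod => j _; apply: per_j => // h.
  by move: h; rewrite logn_gt0 mem_primes => /andP [].
rewrite big_split /= -hm gk_prod; apply: leq_mul => //.
apply: leq_pexp2l; [rewrite expn_gt0; lia | lia].
Qed.


Lemma rad_eq m N : 0 < m -> m < N ->
  rad m = \prod_(0 <= j < N) (if j \in primes m then j else 1).
Proof.
move=> m0 mN.
rewrite -big_mkcond /= -big_filter /rad.
apply: perm_big; apply: uniq_perm.
- exact: primes_uniq.
- by apply: filter_uniq; apply: iota_uniq.
move=> x; rewrite mem_filter mem_iota add0n.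
case h: (x \in primes m) => //=.
move: h; rewrite mem_primes => /and3P [_ _ d].
by have := dvdn_leq m0 d; lia.
Qed.

Lemma decomp B N : 0 < B -> B < N -> B = \prod_(0 <= j < N) j ^ logn j B.
Proof.
move=> B0 BN.
have e1 := widen_partn predT (m := N.-1) (n := B) ltac:(lia).
rewrite partnT // prednK in e1; last by apply: (leq_ltn_trans _ BN).
by rewrite {1}e1.
Qed.

Open Scope R_scope.

Lemma my_ln_le x y : 0 < x -> x <= y -> ln x <= ln y.
Proof.
move=> hx hxy; case: (Rle_lt_or_eq_dec _ _ hxy) => h.
- by apply: Rlt_le; apply: ln_increasing.
- by rewrite h; apply: Rle_refl.
Qed.

Lemma prodR_INR (f : nat -> nat) N :
  prodR N (fun j => INR (f j)) = INR (\prod_(0 <= j < N) f j)%N.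
Proof.
elim: N => [|N IH] /=; first by rewrite big_mkord big_ord0.
by rewrite big_nat_recr //= IH -mult_INR.
Qed.

Lemma prodR_abs f N : Rabs (prodR N f) = prodR N (fun j => Rabs (f j)).
Proof.
elim: N => [|N IH] /=; first by rewrite Rabs_R1.
by rewrite Rabs_mult IH.
Qed.

Lemma prodR_ext f g N : (forall j, f j = g j) -> prodR N f = prodR N g.
Proof. by move=> h; elim: N => [|N IH] //=; rewrite IH h. Qed.

Lemma prodR_nonneg f N : (forall j, 0 <= f j) -> 0 <= prodR N f.
Proof.
move=> h; elim: N => [|N IH] /=; first lra.
by apply: Rmult_le_pos.
Qed.

Lemma prodR_le f g N : (forall j, 0 <= f j <= g j) -> prodR N f <= prodR N g.
Proof.
move=> h; elim: N => [|N IH] /=; first lra.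
apply: Rmult_le_compat => //.
- by apply: prodR_nonneg => j; case: (h j).
- by case: (h N).
- by case: (h N).
Qed.

Lemma prodR_div f g N : prodR N (fun j => f j / g j) = prodR N f / prodR N g.
Proof.
elim: N => [|N IH] /=; first by field.
rewrite IH /Rdiv Rinv_mult; ring.
Qed.

Lemma prodR_neq0 f N : (forall j, f j <> 0) -> prodR N f <> 0.
Proof.
move=> h; elim: N => [|N IH] /=; first lra.
by apply: Rmult_integral_contrapositive_currified.
Qed.

Lemma INR_expn (j x : nat) : INR (j ^ x)%N = INR j ^ x.
Proof. elim: x => [|x IH] //=. by rewrite expnS mult_INR IH. Qed.

Definition aa (m j : nat) : nat := if j \in primes m then j else 1%N.
Definition bb (m B C j : nat) : Z :=
  if j \in primes m then (Z.of_nat (logn j B) - Z.of_nat (logn j C))%Z else 1%Z.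

Lemma L2 B C j : (0 < B)%N -> (0 < C)%N -> j \notin primes (B * C) ->
  logn j B = 0%N /\ logn j C = 0%N.
Proof.
move=> B0 C0; rewrite -logn_gt0 lognM //; lia.
Qed.

Lemma L3 B C j : (0 < B)%N -> (0 < C)%N ->
  powerRZ (INR (aa (B * C) j)) (bb (B * C) B C j) =
  INR (j ^ logn j B)%N / INR (j ^ logn j C)%N.
Proof.
move=> B0 C0; rewrite /aa /bb; case: ifP => h.
- have j0 : INR j <> 0.
    move: h; rewrite mem_primes => /andP [pj _].
    apply: not_0_INR; have := prime_gt0 pj; lia.
  rewrite /Z.sub powerRZ_add // powerRZ_neg' -!pow_powerRZ !INR_expn.
  by [].
- have [-> ->] := L2 B C j B0 C0 (negbT h).
  rewrite /=; field.
Qed.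

Lemma L4 B C j : (0 < B)%N -> (0 < C)%N ->
  (forall p, prime p -> (p %| B)%N -> (p %| C)%N -> False) ->
  bb (B * C) B C j <> 0%Z.
Proof.
move=> B0 C0 cop; rewrite /bb; case: ifP => h; last by [].
move: (h); rewrite -logn_gt0 lognM // => hs heq.
have ex : logn j B = logn j C by lia.
have hB : (0 < logn j B)%N by lia.
have hC : (0 < logn j C)%N by lia.
move: hB hC; rewrite !logn_gt0 !mem_primes => /and3P [pj _ dB] /and3P [_ _ dC].
exact: (cop j pj dB dC).
Qed.

Lemma L5 B C j : (0 < B)%N -> (0 < C)%N ->
  Rabs (IZR (bb (B * C) B C j)) <= INR (maxn 1 (logn j (B * C))).
Proof.
move=> B0 C0; rewrite /bb -abs_IZR INR_IZR_INZ; apply: IZR_le.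
have hm : (logn j (B * C) <= maxn 1 (logn j (B * C)))%N by apply: leq_maxr.
have h1 : (1 <= maxn 1 (logn j (B * C)))%N by apply: leq_maxl.
move: hm h1; rewrite lognM // => /leP hm /leP h1.
case: ifP => _; lia.
Qed.

Lemma final_arith eps k lQ lG lm h lam lR lK :
  0 < eps -> 1 <= k -> eps * k > 2 * (1 + eps) -> k * lQ <= lG + lm ->
  lm <= 2 * h -> 0 <= lm -> 0 <= lG -> 0 <= lQ ->
  lam <= (1 + eps) * (lQ + lR) - lK ->
  lam < (1 + eps) * lR + eps * h + ((1 + eps) * lG + Rabs lK + 1).
Proof.
intros.
assert (H10 : k * ((1+eps) * lQ) <= k * ((1 + eps) * lG + eps * h)).
{ assert (k * ((1+eps)*lQ) <= (1+eps)*(lG+lm)) by nra.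
  assert ((1+eps)*lG <= k*((1+eps)*lG)) by nra.
  assert ((1+eps)*lm <= (eps*k/2)*lm) by nra.
  nra. }
assert (H11 : (1+eps) * lQ <= (1 + eps) * lG + eps * h).
{ apply Rmult_le_reg_l with k; lra. }
assert (Hr : (1 + eps) * (lQ + lR) = (1+eps)*lQ + (1+eps)*lR) by ring.
assert (- lK <= Rabs lK) by (rewrite <- Rabs_Ropp; apply Rle_abs). lra.
Qed.

Lemma ln_ge0_nat n : (0 < n)%N -> 0 <= ln (INR n).
Proof.
move=> n0; rewrite -ln_1; apply: my_ln_le; first lra.
rewrite -/(INR 1); apply: le_INR; apply/leP; exact n0.
Qed.

Theorem lemma5p2 :
  LangWaldschmidt ->
  forall eps : R, 0 < eps ->
  exists C' : R,
    forall b c : Z,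
      c <> 0%Z -> Z.gcd b c = 1%Z ->
      b <> 0%Z -> b <> c ->
      lambda1 b c < (1 + eps) * N1 b c + eps * height b c + C'.
Proof.
move=> LW eps Heps.
have [K [HK HLW]] := LW eps Heps.
have [k Hk] := INR_unbounded (2 * (1 + eps) / eps).
have Hk' : eps * INR k > 2 * (1 + eps).
  have := Rmult_lt_compat_l eps _ _ Heps Hk.
  have -> : eps * (2 * (1 + eps) / eps) = 2 * (1 + eps) by field; lra.
  lra.
have k1 : (0 < k)%N.
  case: k Hk Hk' => [|k'] _ //= Hk'; exfalso; nra.
have k1R : 1 <= INR k by rewrite -/(INR 1); apply: le_INR; apply/leP.
set G := ((k ^ k) ^ (2 ^ k))%N.
have G0 : (0 < G)%N by rewrite /G !expn_gt0 k1.
have lG0 : 0 <= ln (INR G) by apply: ln_ge0_nat.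
exists ((1 + eps) * ln (INR G) + Rabs (ln K) + 1).
move=> b c Hc Hg Hb Hbc.
set B := Z.abs_nat b. set C := Z.abs_nat c.
have B0 : (0 < B)%N by apply/ltP; rewrite /B; lia.
have C0 : (0 < C)%N by apply/ltP; rewrite /C; lia.
have HB : INR B = Rabs (IZR b) by rewrite INR_IZR_INZ Zabs2Nat.id_abs abs_IZR.
have HC : INR C = Rabs (IZR c) by rewrite INR_IZR_INZ Zabs2Nat.id_abs abs_IZR.
set m := (B * C)%N.
have m0 : (0 < m)%N by rewrite muln_gt0 B0 C0.
have Em : Z.abs_nat (b * c) = m by rewrite Zabs2Nat.inj_mul.
set N := m.+1.
have Hrad : rad m = (\prod_(0 <= j < N) aa m j)%N := rad_eq m N m0 (ltnSn m).
have aa0 : forall j, (0 < aa m j)%N.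
  move=> j; rewrite /aa; case: ifP => // h.
  by move: h; rewrite mem_primes => /and3P [pj _ _]; apply: prime_gt0.
have rad0 : (0 < rad m)%N by rewrite Hrad; apply: prodn_gt0.
have lR0 : 0 <= ln (INR (rad m)) by apply: ln_ge0_nat.
set Qn := (\prod_(0 <= j < N) maxn 1 (logn j m))%N.
have Q0 : (0 < Qn)%N by apply: prodn_gt0 => j; rewrite leq_max.
have HQ : (Qn ^ k <= G * m)%N := core k m N k1 m0 (ltnSn m).
have Q0R : 0 < INR Qn by apply: lt_0_INR; apply/ltP.
have m0R : 0 < INR m by apply: lt_0_INR; apply/ltP.
have G0R : 0 < INR G by apply: lt_0_INR; apply/ltP.
have lQ : INR k * ln (INR Qn) <= ln (INR G) + ln (INR m).
  rewrite -ln_pow // -ln_mult //; apply: my_ln_le; first by apply: pow_lt.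
  rewrite -INR_expn -mult_INR; apply: le_INR; apply/leP; exact HQ.
have lQ0 : 0 <= ln (INR Qn) by apply: ln_ge0_nat.
have lm0 : 0 <= ln (INR m) by apply: ln_ge0_nat.
have Hh : ln (INR m) <= 2 * height b c.
  have B0R : 0 < INR B by apply: lt_0_INR; apply/ltP.
  have C0R : 0 < INR C by apply: lt_0_INR; apply/ltP.
  have h1 : INR B <= IZR (Z.max (Z.abs b) (Z.abs c)).
    rewrite INR_IZR_INZ Zabs2Nat.id_abs; apply: IZR_le; lia.
  have h2 : INR C <= IZR (Z.max (Z.abs b) (Z.abs c)).
    rewrite INR_IZR_INZ Zabs2Nat.id_abs; apply: IZR_le; lia.
  rewrite /height /m mult_INR ln_mult //.
  have := my_ln_le _ _ B0R h1; have := my_ln_le _ _ C0R h2; lra.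
have HN1 : N1 b c = ln (INR (rad m)) by rewrite /N1 Em.
set x := IZR b / IZR c.
have Hlam : lambda1 b c = ln (Rmax 1 (/ Rabs (1 - x))) by [].
have cR : IZR c <> 0 by apply: not_0_IZR.
case: (Rle_lt_dec 1 (Rabs (1 - x))) => hx.
  rewrite Hlam Rmax_left; last first.
    apply: (Rle_trans _ (/ 1)); last by rewrite Rinv_1; lra.
    apply: Rinv_le_contravar => //; lra.
  rewrite ln_1 HN1.
  have h0 : 0 <= height b c by lra.
  have := Rmult_le_pos _ _ (ltac:(lra) : 0 <= 1 + eps) lR0.
  have := Rmult_le_pos _ _ (ltac:(lra) : 0 <= eps) h0.
  have := Rmult_le_pos _ _ (ltac:(lra) : 0 <= 1 + eps) lG0.
  have := Rabs_pos (ln K).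
  lra.
have hxpos : 0 < x by have [h1 h2] := Rabs_def2 _ _ hx; lra.
have hx1 : x <> 1.
  move=> e; apply: Hbc; apply: eq_IZR.
  have : IZR b = x * IZR c by rewrite /x; field.
  by rewrite e Rmult_1_l.
have Habs0 : 0 < Rabs (1 - x) by apply: Rabs_pos_lt; lra.
have HP : prodR N (fun j => powerRZ (INR (aa m j)) (bb m B C j)) = x.
  rewrite (prodR_ext _ (fun j => INR (j ^ logn j B)%N / INR (j ^ logn j C)%N) N);
    last by move=> j; apply: L3.
  rewrite prodR_div !prodR_INR -(decomp B N B0) -?(decomp C N C0); last 2 first.
  - by rewrite /N /m ltnS leq_pmull.
  - by rewrite /N /m ltnS leq_pmulr.
  rewrite HB HC (_ : Rabs (IZR b) / Rabs (IZR c) = Rabs x); last by rewrite /x /Rdiv Rabs_mult Rabs_inv.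
  by apply: Rabs_pos_eq; lra.
have cop : forall p, prime p -> (p %| B)%N -> (p %| C)%N -> False.
  move=> p pp /dvdnP [q1 e1] /dvdnP [q2 e2].
  have d1 : (Z.of_nat p | b)%Z.
    apply/Z.divide_abs_r; rewrite -Zabs2Nat.id_abs -/B e1.
    exists (Z.of_nat q1); lia.
  have d2 : (Z.of_nat p | c)%Z.
    apply/Z.divide_abs_r; rewrite -Zabs2Nat.id_abs -/C e2.
    exists (Z.of_nat q2); lia.
  have := Z.gcd_greatest _ _ _ d1 d2; rewrite Hg => /Z.divide_1_r_nonneg h.
  have := h ltac:(lia); have := prime_gt1 pp; lia.
have bb0 : forall j, bb m B C j <> 0%Z by move=> j; apply: L4.
have HLW' := HLW N (aa m) (bb m B C)
  (fun j _ => (ltP (aa0 j))) (fun j _ => bb0 j) ltac:(rewrite HP; exact hx1).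
rewrite HP in HLW'.
set D := Rabs (prodR N (fun j => IZR (bb m B C j)) * prodR N (fun j => INR (aa m j))) in HLW'.
set QR := INR Qn * INR (rad m).
have HD : D <= QR.
  rewrite /D /QR Rabs_mult prodR_abs Hrad -prodR_INR.
  rewrite (Rabs_pos_eq (prodR N (fun j => INR (aa m j)))); last first.
    by apply: prodR_nonneg => j; apply: pos_INR.
  apply: Rmult_le_compat.
  - by apply: prodR_nonneg => j; apply: Rabs_pos.
  - by apply: prodR_nonneg => j; apply: pos_INR.
  - rewrite /Qn -prodR_INR; apply: prodR_le => j; split; first by apply: Rabs_pos.
    exact: L5.
  - by apply: Rle_refl.
have HD0 : 0 < D.
  rewrite /D; apply: Rabs_pos_lt; apply: Rmult_integral_contrapositive_currified;
    apply: prodR_neq0 => j.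
  - by apply: not_0_IZR.
  - by apply: not_0_INR; have := aa0 j; lia.
have HM : 1 <= maxR N (fun j => IZR (Z.abs (bb m B C j))).
  rewrite /N /=; apply: Rle_trans; last by apply: Rmax_r.
  have := bb0 m; move=> hb; apply: IZR_le; lia.
have QR0 : 0 < QR by rewrite /QR; apply: Rmult_lt_0_compat => //; apply: lt_0_INR; apply/ltP.
have Hpow : Rpower D (1 + eps) <= Rpower QR (1 + eps) by apply: Rle_Rpower_l; lra.
have Hrp0 : 0 < Rpower D (1 + eps) by rewrite /Rpower; apply: exp_pos.
have Hrq0 : 0 < Rpower QR (1 + eps) by rewrite /Rpower; apply: exp_pos.
have Hlow : K / Rpower QR (1 + eps) <= Rabs (1 - x).
  apply: (Rle_trans _ (K / Rpower D (1 + eps))).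
    apply: Rmult_le_compat_l; first lra.
    by apply: Rinv_le_contravar.
  apply: (Rle_trans _ (K * maxR N (fun j => IZR (Z.abs (bb m B C j))) / Rpower D (1 + eps))).
    rewrite /Rdiv; apply: Rmult_le_compat_r; first by left; apply: Rinv_0_lt_compat.
    nra.
  rewrite Rabs_minus_sym; apply: Rge_le; exact HLW'.
have Hinv : / Rabs (1 - x) <= Rpower QR (1 + eps) / K.
  have Kq : 0 < K / Rpower QR (1 + eps) by apply: Rdiv_lt_0_compat.
  have := Rinv_le_contravar _ _ Kq Hlow.
  have -> : / (K / Rpower QR (1 + eps)) = Rpower QR (1 + eps) / K by field; lra.
  by [].
have Hinv1 : 1 <= / Rabs (1 - x).
  apply: (Rle_trans _ (/ 1)); first by rewrite Rinv_1; lra.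
  apply: Rinv_le_contravar => //; lra.
have Hlam2 : lambda1 b c <= (1 + eps) * (ln (INR Qn) + ln (INR (rad m))) - ln K.
  rewrite Hlam Rmax_right //.
  apply: (Rle_trans _ (ln (Rpower QR (1 + eps) / K))).
    apply: my_ln_le => //; apply: Rinv_0_lt_compat => //.
  rewrite /Rdiv ln_mult //; last by apply: Rinv_0_lt_compat.
  rewrite ln_Rinv // ln_Rpower /QR ln_mult //; last by apply: lt_0_INR; apply/ltP.
  lra.
rewrite HN1.
exact: (final_arith _ _ _ _ _ _ _ _ _ Heps k1R Hk' lQ Hh lm0 lG0 lQ0 Hlam2).
Qed.
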